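(* Let $K$ be a field of characteristic $0$, $d\geq 2$ an integer, $m$ an integer with $\gcd(m,d)=1$, $r:=m/d$, and $E\geq 2$ an integer. Let $V_{r,E}(x):=\sum_{k=0}^{E-1}\binom{r}{k}x^k\in K[x]$, where $\binom{r}{k}=\frac{r(r-1)\cdots(r-k+1)}{k!}$. Suppose $m>d(E-1)$. Then the polynomial $F(x)=(1+x)^m-V_{r,E}(x)^d$ has degree $m$, has no nonzero repeated roots (in an algebraic closure of $K$), and has $0$ as a root of multiplicity exactly $E$. Equivalently, $f(x):=F(x)/x^E$ is a polynomial of positive degree $m-E$ without repeated roots and with nonzero constant term. *)

(* Defs.v *)
From HB Require Import structures.
From mathcomp Require Import all_boot all_order all_algebra.
Set Implicit Arguments. Unset Strict Implicit. Unset Printing Implicit Defensive.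
Import Order.TTheory GRing.Theory Num.Theory.
Local Open Scope ring_scope.

Definition gbinom (K : fieldType) (r : K) (k : nat) : K :=
  (\prod_(i < k) (r - i%:R)) / (k`!)%:R.

Definition Vpoly (K : fieldType) (r : K) (E : nat) : {poly K} :=
  \sum_(k < E) (gbinom r k) *: 'X^k.

Definition Fpoly (K : fieldType) (m d E : nat) : {poly K} :=
  (1 + 'X) ^+ m - (Vpoly (m%:R / d%:R) E) ^+ d.

(* Main.v *)
Require Import Defs.
From HB Require Import structures.
From mathcomp Require Import all_boot all_order all_algebra.
From mathcomp Require Import ring zify.
Import Order.TTheory GRing.Theory Num.Theory.
Local Open Scope ring_scope.

Section Aux.
Variable K : fieldType.
Hypothesis hc : forall n : nat, (n%:R == 0 :> K) = (n == 0%N).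

Lemma natK_neq0 n : (n.+1%:R : K) != 0.
Proof. by rewrite hc. Qed.

Lemma natK_inj : injective (fun n : nat => (n%:R : K)).
Proof.
move=> a b /= eab.
wlog lab : a b eab / (a <= b)%N.
  by move=> W; case: (leqP a b) => h; [|symmetry]; apply: W => //; apply: ltnW.
have : ((b - a)%N%:R : K) == 0 by rewrite natrB // eab subrr.
by rewrite hc subn_eq0 => hba; apply/eqP; rewrite eqn_leq lab hba.
Qed.

Lemma gbinom0 r : gbinom r 0 = 1 :> K.
Proof. by rewrite /gbinom big_ord0 fact0 divr1. Qed.

Lemma gbinomS (r : K) k : gbinom r k.+1 = gbinom r k * (r - k%:R) / k.+1%:R.
Proof.
rewrite /gbinom big_ord_recr /= factS natrM.
have h1 := natK_neq0 k.
have h2 : (k`!%:R : K) != 0 by rewrite hc -lt0n fact_gt0.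
by field; rewrite addrC natr1 h1 h2.
Qed.

Lemma VpolyS (r : K) n : Vpoly r n.+1 = Vpoly r n + (gbinom r n)%:P * 'X^n.
Proof. by rewrite /Vpoly big_ord_recr /= mul_polyC. Qed.

Lemma V_ode (r : K) n :
  (1 + 'X) * (Vpoly r n.+1)^`() - r%:P * Vpoly r n.+1
   = - ((r - n%:R) * gbinom r n)%:P * 'X^n.
Proof.
elim: n => [|n IH].
  rewrite VpolyS /Vpoly big_ord0 gbinom0 !expr0 add0r mulr1 derivC mulr0 sub0r.
  by rewrite polyC1 !mulr1 subr0.
rewrite VpolyS derivD derivM derivC mul0r add0r derivXn /=.
have -> : (1 + 'X) * ((Vpoly r n.+1)^`() + (gbinom r n.+1)%:P * ('X^n *+ n.+1))
  - r%:P * (Vpoly r n.+1 + (gbinom r n.+1)%:P * 'X^(n.+1))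
  = ((1 + 'X) * (Vpoly r n.+1)^`() - r%:P * Vpoly r n.+1)
   + (1 + 'X) * (gbinom r n.+1)%:P * ('X^n *+ n.+1)
   - r%:P * (gbinom r n.+1)%:P * 'X^(n.+1) by ring.
rewrite IH.
have key : (r - n%:R) * gbinom r n = n.+1%:R * gbinom r n.+1.
  rewrite gbinomS; have := natK_neq0 n => h; by field; rewrite addrC natr1.
rewrite key !rmorphM !rmorphB /= !rmorph_nat exprS.
ring.
Qed.


Lemma Vm1 (r : K) (r0 : r != 0) n :
  (Vpoly r n.+1).[-1] = (-1) ^+ n * gbinom r n * (r - n%:R) / r.
Proof.
elim: n => [|n IH].
  rewrite VpolyS /Vpoly big_ord0 add0r gbinom0 !hornerE /=.
  by field.
rewrite VpolyS hornerD IH hornerM hornerC hornerXn gbinomS exprS.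
have := natK_neq0 n => h.
by field; rewrite addrC natr1 h r0.
Qed.

Lemma gbinom_neq0 (r : K) (h : forall i : nat, r != i%:R) k : gbinom r k != 0.
Proof.
rewrite /gbinom mulf_neq0 //.
  by apply/prodf_neq0 => i _; rewrite subr_eq0 h.
by rewrite invr_eq0 hc -lt0n fact_gt0.
Qed.

Lemma D_ode (d' m' e : nat) :
  let d := d'.+1 in let m := m'.+1 in
  let r : K := m%:R / d%:R in
  let V := Vpoly r e.+1 in
  let D := (1 + 'X) ^+ m - V ^+ d in
  (1 + 'X) * D^`() - m%:R * D
   = (d%:R * ((r - e%:R) * gbinom r e))%:P * 'X^e * V ^+ d'.
Proof.
move=> d m r V D.
have hdr : d%:R * r = m%:R.
  by rewrite /r mulrC divfK // hc.
clearbody r.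
have hode := V_ode r e.
have hode' : (1 + 'X) * V^`() = r%:P * V - ((r - e%:R) * gbinom r e)%:P * 'X^e.
  by rewrite -[LHS](subrK (r%:P * V)) hode mulNr addrC.
rewrite /D derivB !deriv_exp derivD derivX derivC add0r /=.
have e1 : (1 + 'X) * (V^`() * V ^+ d' *+ d) = ((1 + 'X) * V^`()) * V ^+ d' *+ d by ring.
rewrite mulrBr e1 hode'.
have eH : (1 + 'X) * (1 * (1 + 'X) ^+ m' *+ m'.+1) = (m'.+1%:R : {poly K}) * (1 + 'X) ^+ m'.+1.
  by rewrite exprS; ring.
rewrite eH.
have -> : (m%:R : {poly K}) = (d%:R * r)%:P by rewrite hdr rmorph_nat.
set c := ((r - e%:R) * gbinom r e).
clearbody c.
rewrite !polyCM (rmorph_nat polyC).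
clearbody V; rewrite {}/D; subst d m. rewrite !exprS. ring.
Qed.

End Aux.

Theorem theorem7p1 (K : fieldType) (d m E : nat)
  (hchar : [pchar K] =i pred0)
  (hd : (2 <= d)%N) (hmd : coprime m d) (hE : (2 <= E)%N)
  (hm : (d * (E - 1) < m)%N) :
  (size (Fpoly K m d E)).-1 = m
  /\ (forall (L : closedFieldType) (iota : {rmorphism K -> L}) (z : L),
        z != 0 -> root (map_poly iota (Fpoly K m d E)) z ->
        ~~ root (map_poly iota (Fpoly K m d E))^`() z)
  /\ mup 0 (Fpoly K m d E) = E.
Proof.
have hc := (pcharf0P K).1 hchar.
case: d hd hmd hm => [|d'] // hd hmd hm.
case: E hE hm => [|e] // hE hm.
case: m hmd hm => [|m'] hmd hm; first by rewrite ltn0 in hm.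
set r : K := m'.+1%:R / d'.+1%:R.
have hnonint : forall i : nat, r != i%:R.
  move=> i; apply/eqP => hri.
  have : m'.+1%:R = (i * d'.+1)%N%:R :> K.
    by rewrite natrM -hri /r divfK // hc.
  move/(@natK_inj K hc) => hmi.
  move: hmd; rewrite hmi coprimeMl => /andP [_].
  by rewrite /coprime gcdnn => /eqP hd1; rewrite hd1 in hd.
have r0 : r != 0 by have := hnonint 0%N.
set V := Vpoly r e.+1.
set F := Fpoly K m'.+1 d'.+1 e.+1.
have hF : F = (1 + 'X) ^+ m'.+1 - V ^+ d'.+1 by [].
set c := (r - e%:R) * gbinom r e.
have c0 : c != 0.
  by rewrite mulf_neq0 ?gbinom_neq0 // subr_eq0 hnonint.
have dc0 : d'.+1%:R * c != 0 by rewrite mulf_neq0 // hc.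
have hode : (1 + 'X) * F^`() - m'.+1%:R * F = (d'.+1%:R * c)%:P * 'X^e * V ^+ d'
  := @D_ode K hc d' m' e.
set w := d'.+1%:R * c in dc0 hode.
clearbody w.
have V0 : V.[0] = 1.
  by rewrite horner_coef0 /V /Vpoly -poly_def coef_poly /= gbinom0.
have sX : size (1 + 'X : {poly K}) = 2 by rewrite addrC -polyC1 size_XaddC.
have sH : size ((1 + 'X) ^+ m'.+1 : {poly K}) = m'.+2.
  have := size_exp (1 + 'X : {poly K}) m'.+1; rewrite sX /= mul1n.
  by case: size => //= n ->.
have sV : (size V <= e.+1)%N by rewrite /V /Vpoly -poly_def size_poly.
have sG : (size (V ^+ d'.+1) < m'.+2)%N.
  apply: leq_ltn_trans (size_poly_exp_leq _ _) _.
  have s1 : ((size V).-1 <= e)%N by lia.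
  have := leq_mul s1 (leqnn d'.+1).
  rewrite subn1 /= in hm.
  rewrite ltnS; lia.
have sF : size F = m'.+2 by rewrite hF size_polyDl ?size_polyN sH.
split; first by rewrite sF.
split.
  move=> L iota z z0 hr; apply/negP => hr'.
  have h1 := congr1 (fun p => (map_poly iota p).[z]) hode.
  move: h1 => /=.
  rewrite rmorphB !rmorphM /= [1 + 'X]addrC -polyC1 map_polyXaddC rmorph1 rmorph_nat -deriv_map.
  rewrite map_polyC map_polyXn rmorphXn /=.
  rewrite !hornerE (eqP hr) (eqP hr') !mulr0 subr0 => /esym /eqP.
  rewrite !mulf_eq0 fmorph_eq0 (negbTE dc0) /= expf_eq0 (negbTE z0) andbF /=.
  rewrite expf_eq0 => /andP [_ /eqP Vz].
  have hmX : map_poly iota ((1 + 'X) ^+ m'.+1 : {poly K}) = ('X + 1%:P) ^+ m'.+1.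
    by rewrite -[X in 'X + X%:P](rmorph1 iota) -map_polyXaddC polyC1 addrC rmorphXn.
  have hmF : map_poly iota F = ('X + 1%:P) ^+ m'.+1 - (map_poly iota V) ^+ d'.+1.
    by rewrite hF -hmX -rmorphXn -rmorphB.
  move: hr; rewrite hmF /root.
  rewrite !hornerE Vz expr0n /= subr0 expf_eq0 /= addr_eq0 => /eqP zm1.
  move: Vz; rewrite zm1 -(rmorphN1 iota) horner_map => /eqP; rewrite fmorph_eq0.
  rewrite /V (@Vm1 K hc r r0 e).
  have gb := @gbinom_neq0 K hc r hnonint e.
  have rs : r - e%:R != 0 by rewrite subr_eq0 hnonint.
  apply/negP; apply: mulf_neq0; last by rewrite invr_eq0.
  by apply: mulf_neq0 => //; apply: mulf_neq0 => //; rewrite signr_eq0.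
have coefode : forall k, ((1 + 'X) * F^`() - m'.+1%:R * F)`_k
   = F`_k.+1 *+ k.+1 + (if k == 0%N then 0 else F`_k *+ k) - F`_k *+ m'.+1.
  move=> k; rewrite mulrDl mul1r coefB coefD coefXM !coef_deriv mulr_natl coefMn.
  by case: k.
set Q := (w)%:P * 'X^e * V ^+ d'.
have eQ : Q = 'X^e * ((w)%:P * V ^+ d') by rewrite /Q [_%:P * _]mulrC -mulrA.
have coefQlt : forall k, (k < e)%N -> Q`_k = 0 by move=> k hk; rewrite eQ coefXnM hk.
have coefQe : Q`_e = w.
  by rewrite eQ coefXnM ltnn subnn coefCM -horner_coef0 horner_exp V0 expr1n mulr1.
have natmul0 : forall (x : K) n, x *+ n.+1 = 0 -> x = 0.
  by move=> x n /eqP; rewrite -mulr_natr mulf_eq0 hc orbF => /eqP.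
have hz : forall k, (k <= e)%N -> F`_k = 0.
  elim => [_|k IH hk].
    rewrite -horner_coef0 hF hornerD hornerN !horner_exp V0 hornerD hornerX hornerC.
    by rewrite addr0 !expr1n subrr.
  have := coefode k; rewrite hode coefQlt // IH ?(ltnW hk) // mul0rn if_same.
  by rewrite mul0rn addr0 subr0 => /esym; apply: natmul0.
have hne : F`_e.+1 != 0.
  apply/eqP => h0; move: dc0; rewrite -coefQe /Q -hode coefode h0.
  by rewrite hz // mul0rn !mul0rn if_same add0r subr0 eqxx.
set q := \poly_(i < size F) F`_(i + e.+1).
have hFq : F = 'X^(e.+1) * q.
  apply/polyP => i; rewrite coefXnM coef_poly.
  case: ltnP => hi; first by rewrite hz.
  case: ltnP => hs; first by rewrite subnK.
  by rewrite nth_default //; apply: leq_trans hs (leq_subr _ _).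
have q0 : q`_0 = F`_e.+1 by rewrite coef_poly sF.
have qn0 : q != 0 by apply: contra hne => /eqP q0'; rewrite -q0 q0' coef0.
rewrite hFq mupM ?expf_neq0 ?polyX_eq0 //.
have -> : 'X^(e.+1) = ('X - 0%:P) ^+ e.+1 :> {poly K} by rewrite polyC0 subr0.
by rewrite mup_XsubCX eqxx mupNroot ?addn0 // /root horner_coef0 q0.
Qed.
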